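(* If $(H,R)$ is a semiquasitriangular Hopf algebra, then for all $h\in H$ $$\nu(h)= R^{(2)}h_2R'^{(2)}\otimes S^{2}(R'^{(1)})S(h_1)S(R^{(1)})h_3 = R^{(1)}h_2S(R'^{(1)})\otimes S(h_1)R^{(2)}h_3R'^{(2)}.$$
   Context: All vector spaces are over a field $k$, $\otimes=\otimes_k$. For a Hopf algebra $H$ with comultiplication $\Delta$, counit $\epsilon$, antipode $S$, we use Sweedler notation $\Delta(h)=h_1\otimes h_2$, $(\Delta\otimes\mathrm{id})\Delta(h)=h_1\otimes h_2\otimes h_3$, etc. $\operatorname{Z}(H)$ is the centre of $H$. For $R\in H\otimes H$ we write $R=R^{(1)}\otimes R^{(2)}$ (summation understood); $R'^{(1)}\otimes R'^{(2)}$ denotes another copy of $R$. Definition (semiquasitriangular Hopf algebra): a pair $(H,R)$ with $H$ a Hopf algebra with bijective antipode and $R\in H\otimes H$ invertible such that (1) $R^{(1)}_1\otimes R^{(1)}_2\otimes R^{(2)} = R^{(1)}\otimes R'^{(1)}\otimes R^{(2)}R'^{(2)}$; (2) $R^{(1)}\otimes R^{(2)}_1\otimes R^{(2)}_2 = R^{(1)}R'^{(1)}\otimes R'^{(2)}\otimes R^{(2)}$; (3) $R^{(1)}\otimes R^{(2)}_2R'^{(1)}\otimes R^{(2)}_1R'^{(2)} = R^{(1)}\otimes R'^{(1)}R^{(2)}_1\otimes R'^{(2)}R^{(2)}_2$; (4) $R^{(1)}_2R'^{(1)}\otimes R^{(1)}_1R'^{(2)}\otimes R^{(2)} = R'^{(1)}R^{(1)}_1\otimes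 R'^{(2)}R^{(1)}_2\otimes R^{(2)}$; (5) $\nu(h):=R^{(2)}h_2R'^{(2)}\otimes S(h_1)S(R^{(1)})h_3R'^{(1)}\in H\otimes\operatorname{Z}(H)$ for all $h\in H$; (6) $\nu(h)=R^{(1)}h_2R'^{(1)}\otimes S(R'^{(2)})S(h_1)R^{(2)}h_3$ for all $h\in H$. The map $\nu:H\to H\otimes H$ in the claim is the one defined in (5). *)

(* Defs.v *)
(* An element of H (x) H (resp. H (x) H (x) H) is represented by a finite
   Sweedler-style sum, and equality of tensors is tested through the universal
   property of the tensor product: two finite sums of pure tensors are equal in
   H (x) H iff every k-bilinear map H x H -> W (W any k-vector space) takes the
   same value on them (similarly with trilinear maps for H (x) H (x) H). *)
From HB Require Import structures.
From mathcomp Require Import all_boot all_order all_algebra.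
Set Implicit Arguments. Unset Strict Implicit. Unset Printing Implicit Defensive.
Import GRing.Theory.
Local Open Scope ring_scope.

Section Hopf.
Variables (k : fieldType) (H : algType k).

Definition bilin (W : lmodType k) (phi : H -> H -> W) : Prop :=
  forall (c : k) (x y z : H),
    phi (c *: x + y) z = c *: phi x z + phi y z /\
    phi z (c *: x + y) = c *: phi z x + phi z y.

Definition trilin (W : lmodType k) (phi : H -> H -> H -> W) : Prop :=
  forall (c : k) (x y u v : H),
    phi (c *: x + y) u v = c *: phi x u v + phi y u v /\
    phi u (c *: x + y) v = c *: phi u x v + phi u y v /\
    phi u v (c *: x + y) = c *: phi u v x + phi u v y.

Definition central (z : H) : Prop := forall y : H, z * y = y * z.

Record is_hopf (Delta : H -> seq (H * H)) (eps : H -> k) (S : H -> H) : Prop := {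
  Delta_lin : forall (c : k) (x y : H) (W : lmodType k) (phi : H -> H -> W),
    bilin phi ->
    \sum_(d <- Delta (c *: x + y)) phi d.1 d.2
    = c *: \sum_(d <- Delta x) phi d.1 d.2 + \sum_(d <- Delta y) phi d.1 d.2;
  Delta_coassoc : forall (h : H) (W : lmodType k) (phi : H -> H -> H -> W),
    trilin phi ->
    \sum_(d <- Delta h) \sum_(e <- Delta d.1) phi e.1 e.2 d.2
    = \sum_(d <- Delta h) \sum_(e <- Delta d.2) phi d.1 e.1 e.2;
  Delta_mul : forall (x y : H) (W : lmodType k) (phi : H -> H -> W),
    bilin phi ->
    \sum_(d <- Delta (x * y)) phi d.1 d.2
    = \sum_(d <- Delta x) \sum_(e <- Delta y) phi (d.1 * e.1) (d.2 * e.2);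
  Delta_one : forall (W : lmodType k) (phi : H -> H -> W),
    bilin phi -> \sum_(d <- Delta 1) phi d.1 d.2 = phi 1 1;
  eps_lin : forall (c : k) (x y : H), eps (c *: x + y) = c * eps x + eps y;
  eps_mul : forall x y : H, eps (x * y) = eps x * eps y;
  eps_one : eps 1 = 1;
  counit_l : forall h : H, \sum_(d <- Delta h) eps d.1 *: d.2 = h;
  counit_r : forall h : H, \sum_(d <- Delta h) eps d.2 *: d.1 = h;
  S_lin : forall (c : k) (x y : H), S (c *: x + y) = c *: S x + S y;
  antipode_l : forall h : H, \sum_(d <- Delta h) S d.1 * d.2 = (eps h)%:A;
  antipode_r : forall h : H, \sum_(d <- Delta h) d.1 * S d.2 = (eps h)%:A;
  S_bij : bijective S
}.

(* nu(h) = R^(2) h_2 R'^(2) (x) S(h_1) S(R^(1)) h_3 R'^(1), tested on phi;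
   h_1 (x) h_2 (x) h_3 = (Delta (x) id) Delta h. *)
Definition nu_app (Delta : H -> seq (H * H)) (S : H -> H) (R : seq (H * H))
    (h : H) (W : lmodType k) (phi : H -> H -> W) : W :=
  \sum_(r <- R) \sum_(q <- R) \sum_(d <- Delta h) \sum_(e <- Delta d.1)
    phi (r.2 * e.2 * q.2) (S e.1 * S r.1 * d.2 * q.1).

Record semiquasitriangular (Delta : H -> seq (H * H)) (eps : H -> k)
    (S : H -> H) (R : seq (H * H)) : Prop := {
  sqt_hopf : is_hopf Delta eps S;
  sqt_inv : exists Ri : seq (H * H),
    (forall (W : lmodType k) (phi : H -> H -> W), bilin phi ->
       \sum_(r <- R) \sum_(q <- Ri) phi (r.1 * q.1) (r.2 * q.2) = phi 1 1) /\
    (forall (W : lmodType k) (phi : H -> H -> W), bilin phi ->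
       \sum_(q <- Ri) \sum_(r <- R) phi (q.1 * r.1) (q.2 * r.2) = phi 1 1);
  sqt1 : forall (W : lmodType k) (phi : H -> H -> H -> W), trilin phi ->
    \sum_(r <- R) \sum_(d <- Delta r.1) phi d.1 d.2 r.2
    = \sum_(r <- R) \sum_(q <- R) phi r.1 q.1 (r.2 * q.2);
  sqt2 : forall (W : lmodType k) (phi : H -> H -> H -> W), trilin phi ->
    \sum_(r <- R) \sum_(d <- Delta r.2) phi r.1 d.1 d.2
    = \sum_(r <- R) \sum_(q <- R) phi (r.1 * q.1) q.2 r.2;
  sqt3 : forall (W : lmodType k) (phi : H -> H -> H -> W), trilin phi ->
    \sum_(r <- R) \sum_(d <- Delta r.2) \sum_(q <- R) phi r.1 (d.2 * q.1) (d.1 * q.2)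
    = \sum_(r <- R) \sum_(d <- Delta r.2) \sum_(q <- R) phi r.1 (q.1 * d.1) (q.2 * d.2);
  sqt4 : forall (W : lmodType k) (phi : H -> H -> H -> W), trilin phi ->
    \sum_(r <- R) \sum_(d <- Delta r.1) \sum_(q <- R) phi (d.2 * q.1) (d.1 * q.2) r.2
    = \sum_(r <- R) \sum_(d <- Delta r.1) \sum_(q <- R) phi (q.1 * d.1) (q.2 * d.2) r.2;
  (* (5): nu(h) lies in H (x) Z(H) *)
  sqt5 : forall h : H, exists s : seq (H * H), (forall p, p \in s -> central p.2) /\
    forall (W : lmodType k) (phi : H -> H -> W), bilin phi ->
      \sum_(p <- s) phi p.1 p.2 = nu_app Delta S R h phi;
  sqt6 : forall (h : H) (W : lmodType k) (phi : H -> H -> W), bilin phi ->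
    nu_app Delta S R h phi
    = \sum_(r <- R) \sum_(q <- R) \sum_(d <- Delta h) \sum_(e <- Delta d.1)
        phi (r.1 * e.2 * q.1) (S q.2 * S e.1 * r.2 * d.2)
}.

End Hopf.

(* Main.v *)
Require Import Defs.
From HB Require Import structures.
From mathcomp Require Import all_boot all_order all_algebra.
Import GRing.Theory.
Local Open Scope ring_scope.
Set Implicit Arguments. Unset Strict Implicit.

Section Aux.
Variables (k : fieldType) (H : algType k).

Definition lin (W : lmodType k) (f : H -> W) :=
  forall (c : k) (x y : H), f (c *: x + y) = c *: f x + f y.

Lemma lin0 (W : lmodType k) (f : H -> W) : lin f -> f 0 = 0.
Proof.
move=> hf; have e := hf 1 0 0; rewrite scale1r addr0 scale1r in e.
by apply/(addrI (f 0)); rewrite addr0 -e.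
Qed.

Lemma linD (W : lmodType k) (f : H -> W) : lin f -> forall x y, f (x + y) = f x + f y.
Proof. by move=> hf x y; have := hf 1 x y; rewrite !scale1r. Qed.

Lemma linZ (W : lmodType k) (f : H -> W) : lin f -> forall c x, f (c *: x) = c *: f x.
Proof. by move=> hf c x; rewrite -[c *: x]addr0 hf lin0 // addr0. Qed.

Lemma lin_sum (W : lmodType k) (f : H -> W) (I : Type) (s : seq I) (g : I -> H) :
  lin f -> f (\sum_(i <- s) g i) = \sum_(i <- s) f (g i).
Proof.
move=> hf; elim: s => [|a s IH]; first by rewrite !big_nil lin0.
by rewrite !big_cons linD // IH.
Qed.

Lemma bl1 (W : lmodType k) (phi : H -> H -> W) : bilin phi ->
  forall c x y z, phi (c *: x + y) z = c *: phi x z + phi y z.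
Proof. by move=> h c x y z; case: (h c x y z). Qed.
Lemma bl2 (W : lmodType k) (phi : H -> H -> W) : bilin phi ->
  forall c x y z, phi z (c *: x + y) = c *: phi z x + phi z y.
Proof. by move=> h c x y z; case: (h c x y z). Qed.

Lemma bilinP (W : lmodType k) (phi : H -> H -> W) :
  (forall z, lin (phi ^~ z)) -> (forall z, lin (phi z)) -> bilin phi.
Proof. by move=> h1 h2 c x y z; split; [apply: h1|apply: h2]. Qed.

Lemma bilin_l (W : lmodType k) (phi : H -> H -> W) : bilin phi -> forall z, lin (phi ^~ z).
Proof. by move=> h z c x y; apply: bl1. Qed.
Lemma bilin_r (W : lmodType k) (phi : H -> H -> W) : bilin phi -> forall z, lin (phi z).
Proof. by move=> h z c x y; apply: bl2. Qed.

Lemma bilin_sum (W : lmodType k) (I : Type) (s : seq I) (phi : I -> H -> H -> W) :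
  (forall i, bilin (phi i)) -> bilin (fun a b => \sum_(i <- s) phi i a b).
Proof.
move=> h c x y z; split;
  by rewrite scaler_sumr -big_split /=; apply: eq_bigr => i _; case: (h i c x y z).
Qed.

Lemma trilinP (W : lmodType k) (phi : H -> H -> H -> W) :
  (forall u v, lin (fun x => phi x u v)) -> (forall u v, lin (fun x => phi u x v)) ->
  (forall u v, lin (fun x => phi u v x)) -> trilin phi.
Proof. by move=> h1 h2 h3 c x y u v; split; [|split]; [apply: h1|apply: h2|apply: h3]. Qed.

End Aux.

Lemma lin_sumf (k : fieldType) (H : algType k) (W : lmodType k) (I : Type) (s : seq I) (f : I -> H -> W) :
  (forall i, lin (f i)) -> lin (fun x => \sum_(i <- s) f i x).
Proof.
by move=> h c x y; rewrite scaler_sumr -big_split /=; apply: eq_bigr => i _; rewrite h.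
Qed.

Lemma lin_scale (k : fieldType) (H : algType k) (W : lmodType k) (f : H -> W) (a : k) :
  lin f -> lin (fun t => a *: f t).
Proof. by move=> hf c x y; rewrite hf scalerDr !scalerA mulrC. Qed.

Lemma lin_cl (k : fieldType) (H : algType k) (W : lmodType k) (chi : H -> H -> W) (g : H -> H) z :
  bilin chi -> lin g -> lin (fun x => chi (g x) z).
Proof. by move=> hc hg c x y; rewrite hg bl1. Qed.
Lemma lin_cr (k : fieldType) (H : algType k) (W : lmodType k) (chi : H -> H -> W) (g : H -> H) z :
  bilin chi -> lin g -> lin (fun x => chi z (g x)).
Proof. by move=> hc hg c x y; rewrite hg bl2. Qed.


Section Hopf.
Variables (k : fieldType) (H : algType k) (Delta : H -> seq (H * H)) (eps : H -> k)
  (S : H -> H) (R : seq (H * H)).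
Hypothesis hs : semiquasitriangular Delta eps S R.
Let hh := sqt_hopf hs.

Lemma SL c x y : S (c *: x + y) = c *: S x + S y.
Proof. exact: (S_lin hh c x y). Qed.
Lemma EL c x y : eps (c *: x + y) = c * eps x + eps y.
Proof. exact: (eps_lin hh c x y). Qed.

Lemma scAl (c : k) (x y : H) : (c *: x) * y = c *: (x * y). Proof. by rewrite scalerAl. Qed.
Lemma scAr (c : k) (x y : H) : x * (c *: y) = c *: (x * y). Proof. by rewrite scalerAr. Qed.

Ltac lsimp := rewrite ?(mulrDl, mulrDr, scAl, scAr, SL, EL, scalerDl, scalerDr, scalerA, mulrDl, addrA).

Lemma Dsum_lin (W : lmodType k) (phi : H -> H -> W) : bilin phi ->
  lin (fun x => \sum_(d <- Delta x) phi d.1 d.2).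
Proof. by move=> hp c x y; exact: (Delta_lin hh c x y hp). Qed.

Lemma anti_l_f (W : lmodType k) (f : H -> W) y : lin f ->
  \sum_(g <- Delta y) f (S g.1 * g.2) = eps y *: f 1.
Proof. by move=> hf; rewrite -lin_sum // (antipode_l hh) // linZ. Qed.

Lemma anti_r_f (W : lmodType k) (f : H -> W) y : lin f ->
  \sum_(g <- Delta y) f (g.1 * S g.2) = eps y *: f 1.
Proof. by move=> hf; rewrite -lin_sum // (antipode_r hh) // linZ. Qed.

Lemma counit_l_f (W : lmodType k) (f : H -> W) y : lin f ->
  \sum_(g <- Delta y) eps g.1 *: f g.2 = f y.
Proof.
move=> hf; rewrite -{2}(counit_l hh y) lin_sum //; apply: eq_bigr => g _; by rewrite linZ.
Qed.

Lemma counit_r_f (W : lmodType k) (f : H -> W) y : lin f ->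
  \sum_(g <- Delta y) eps g.2 *: f g.1 = f y.
Proof.
move=> hf; rewrite -{2}(counit_r hh y) lin_sum //; apply: eq_bigr => g _; by rewrite linZ.
Qed.

Lemma S1 : S 1 = 1.
Proof.
have := antipode_l hh 1; rewrite (Delta_one hh (phi := fun a b => S a * b)).
  by rewrite mulr1 (eps_one hh) scale1r.
by apply: bilinP => z c x y /=; lsimp.
Qed.

Ltac lt := let c := fresh in let x := fresh in let y := fresh in
  move=> c x y /=; lsimp; rewrite ?[_ * c]mulrC.

Lemma Smul a b : S (a * b) = S b * S a.
Proof.
pose T x y z := \sum_(e <- Delta b) \sum_(e' <- Delta e.1)
   S (x * e'.1) * (y * e'.2) * S e.2 * S z.
pose P := \sum_(d <- Delta a) \sum_(d' <- Delta d.1) T d'.1 d'.2 d.2.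
have W1 : P = S b * S a.
  rewrite /P /T.
  transitivity (\sum_(d <- Delta a) \sum_(e <- Delta b)
      ((eps e.1 *: S e.2) * (eps d.1 *: S d.2))); last first.
    under eq_bigr do rewrite -mulr_suml.
    rewrite (counit_l_f (f := S)); last by lt.
    by rewrite -mulr_sumr (counit_l_f (f := S)) //; lt.
  apply: eq_bigr => d _; rewrite exchange_big; apply: eq_bigr => e _.
  rewrite -(Delta_mul hh d.1 e.1 (phi := fun x y => S x * y * S e.2 * S d.2)); last first.
    by apply: bilinP => z; lt.
  rewrite (anti_l_f (f := fun t => t * S e.2 * S d.2)); last by lt.
  rewrite (eps_mul hh) mul1r scAl scAr scalerA; congr (_ *: _); exact: mulrC.
have W2 : P = S (a * b).
  rewrite /P (Delta_coassoc hh a (phi := T)); last first.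
    by apply: trilinP => u v; rewrite /T; apply: lin_sumf => e; apply: lin_sumf => e'; lt.
  transitivity (\sum_(d <- Delta a) eps d.2 *: S (d.1 * b)); last first.
    by rewrite (counit_r_f (f := fun x => S (x * b))) //; lt.
  apply: eq_bigr => d _.
  transitivity (\sum_(d' <- Delta d.2) S (d.1 * b) * (d'.1 * S d'.2)); last first.
    by rewrite (anti_r_f (f := fun t => S (d.1 * b) * t)) ?mulr1 //; lt.
  apply: eq_bigr => d' _; rewrite /T.
  rewrite (Delta_coassoc hh b (phi := fun x y z => S (d.1 * x) * (d'.1 * y) * S z * S d'.2)); last first.
    by apply: trilinP => u v; lt.
  transitivity (\sum_(e <- Delta b) eps e.2 *: (S (d.1 * e.1) * d'.1 * S d'.2)).
    apply: eq_bigr => e _.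
    transitivity (\sum_(e' <- Delta e.2) (fun t => S (d.1 * e.1) * d'.1 * t * S d'.2) (e'.1 * S e'.2)).
      by apply: eq_bigr => g _; rewrite /= !mulrA.
    by rewrite (anti_r_f (f := fun t => S (d.1 * e.1) * d'.1 * t * S d'.2)) ?mulr1 //; lt.
  rewrite (counit_r_f (f := fun x => S (d.1 * x) * d'.1 * S d'.2)); last by lt.
  by rewrite mulrA.
by rewrite -W1 -W2.
Qed.

Lemma lin_epsZ (W : lmodType k) (w : W) : lin (fun x => eps x *: w).
Proof. by move=> c x y; rewrite EL scalerDl scalerA. Qed.

Lemma epsR1 : \sum_(r <- R) eps r.1 *: r.2 = 1.
Proof.
set e := \sum_(r <- R) eps r.1 *: r.2.
have key : forall (W : lmodType k) (psi : H -> H -> W), bilin psi ->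
    \sum_(r <- R) psi r.1 r.2 = \sum_(q <- R) psi q.1 (e * q.2).
  move=> W psi hp.
  have ht : trilin (fun x y z => eps x *: psi y z).
    apply: trilinP => u v; [exact: lin_epsZ | exact: (lin_scale _ (bilin_l hp v))
      | exact: (lin_scale _ (bilin_r hp v))].
  have E := sqt1 hs ht.
  transitivity (\sum_(r <- R) \sum_(d <- Delta r.1) eps d.1 *: psi d.2 r.2).
    apply: eq_bigr => r _; rewrite (counit_l_f (f := fun t => psi t r.2)) //.
    exact: bilin_l.
  rewrite E exchange_big; apply: eq_bigr => q _ /=.
  rewrite /e mulr_suml (lin_sum (f := psi q.1)); last exact: bilin_r.
  by apply: eq_bigr => r _; rewrite scAl (linZ (bilin_r hp q.1)).
have [Ri [Rinv1 Rinv2]] := sqt_inv hs.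
have := key _ (fun a b => \sum_(v <- Ri) eps (a * v.1) *: (b * v.2)).
rewrite (Rinv1 _ (fun a b => eps a *: b)); last by apply: bilinP => z; lt.
under [in RHS]eq_bigr do under eq_bigr do rewrite -mulrA.
rewrite (Rinv1 _ (fun a b => eps a *: (e * b))); last by apply: bilinP => z; lt.
rewrite /= (eps_one hh) !scale1r mulr1 => -> //.
by apply: bilin_sum => v; apply: bilinP => z; lt.
Qed.

Lemma epsR2 : \sum_(r <- R) eps r.2 *: r.1 = 1.
Proof.
set e := \sum_(r <- R) eps r.2 *: r.1.
have key : forall (W : lmodType k) (psi : H -> H -> W), bilin psi ->
    \sum_(r <- R) psi r.1 r.2 = \sum_(q <- R) psi (e * q.1) q.2.
  move=> W psi hp.
  have ht : trilin (fun x y z => eps z *: psi x y).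
    apply: trilinP => u v; [exact: (lin_scale _ (bilin_l hp u))
      | exact: (lin_scale _ (bilin_r hp u)) | exact: lin_epsZ].
  have E := sqt2 hs ht.
  transitivity (\sum_(r <- R) \sum_(d <- Delta r.2) eps d.2 *: psi r.1 d.1).
    apply: eq_bigr => r _; rewrite (counit_r_f (f := fun t => psi r.1 t)) //.
    exact: bilin_r.
  rewrite E exchange_big; apply: eq_bigr => q _ /=.
  rewrite /e mulr_suml (lin_sum (f := psi^~ q.2)); last exact: bilin_l.
  by apply: eq_bigr => r _; rewrite scAl (linZ (bilin_l hp q.2)).
have [Ri [Rinv1 Rinv2]] := sqt_inv hs.
have := key _ (fun a b => \sum_(v <- Ri) eps (b * v.2) *: (a * v.1)).
rewrite (Rinv1 _ (fun a b => eps b *: a)); last by apply: bilinP => z; lt.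
under [in RHS]eq_bigr do under eq_bigr do rewrite -mulrA.
rewrite (Rinv1 _ (fun a b => eps b *: (e * a))); last by apply: bilinP => z; lt.
rewrite /= (eps_one hh) !scale1r mulr1 => -> //.
by apply: bilin_sum => v; apply: bilinP => z; lt.
Qed.

Lemma pullq (W : lmodType k) (I : Type) (L : seq I) h
  (G : H * H -> H * H -> I -> W) :
  \sum_(d <- Delta h) \sum_(e <- Delta d.1) \sum_(q <- L) G d e q
  = \sum_(q <- L) \sum_(d <- Delta h) \sum_(e <- Delta d.1) G d e q.
Proof. under eq_bigr do rewrite exchange_big. by rewrite exchange_big. Qed.

Lemma pull5 (W : lmodType k) (I : Type) (L : seq I) h
  (G : I -> H * H -> H * H -> H * H -> H * H -> W) :
  \sum_(w <- L) \sum_(r <- R) \sum_(q <- R) \sum_(d <- Delta h) \sum_(e <- Delta d.1) G w r q d e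
  = \sum_(r <- R) \sum_(q <- R) \sum_(d <- Delta h) \sum_(e <- Delta d.1) \sum_(w <- L) G w r q d e.
Proof.
rewrite exchange_big; apply: eq_bigr => r _; rewrite exchange_big; apply: eq_bigr => q _.
rewrite exchange_big; apply: eq_bigr => d _; by rewrite exchange_big.
Qed.

Lemma RSR (W : lmodType k) (chi : H -> H -> W) : bilin chi ->
  \sum_(q <- R) \sum_(w <- R) chi (q.1 * S w.1) (q.2 * w.2) = chi 1 1.
Proof.
move=> hc.
have ht : trilin (fun x y z => chi (x * S y) z).
  by apply: trilinP => u v; [apply: lin_cl => //; lt | apply: lin_cl => //; lt | exact: bilin_r].
transitivity (chi 1 (\sum_(r <- R) eps r.1 *: r.2)); last by rewrite epsR1.
rewrite -(sqt1 hs ht) (lin_sum (f := chi 1)); last exact: bilin_r.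
apply: eq_bigr => r _ /=.
rewrite (anti_r_f (f := fun t => chi t r.2)); last exact: bilin_l.
by rewrite (linZ (bilin_r hc 1)).
Qed.

Lemma RRS (W : lmodType k) (chi : H -> H -> W) : bilin chi ->
  \sum_(q <- R) \sum_(w <- R) chi (q.1 * w.1) (w.2 * S q.2) = chi 1 1.
Proof.
move=> hc.
have ht : trilin (fun x y z => chi x (y * S z)).
  by apply: trilinP => u v; [exact: bilin_l | apply: lin_cr => //; lt | apply: lin_cr => //; lt].
transitivity (chi (\sum_(r <- R) eps r.2 *: r.1) 1); last by rewrite epsR2.
rewrite -(sqt2 hs ht) (lin_sum (f := chi^~ 1)); last exact: bilin_l.
apply: eq_bigr => r _ /=.
rewrite (anti_r_f (f := fun t => chi r.1 t)); last exact: bilin_r.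
by rewrite (linZ (bilin_l hc 1)).
Qed.

Lemma SSR (W : lmodType k) (chi : H -> H -> W) : bilin chi ->
  \sum_(w <- R) \sum_(p <- R) chi (S (S p.1) * S w.1) (w.2 * p.2) = chi 1 1.
Proof.
move=> hc.
have ht : trilin (fun x y z => chi (S (S y) * S x) z).
  by apply: trilinP => u v; [apply: lin_cl => //; lt | apply: lin_cl => //; lt | exact: bilin_r].
transitivity (chi 1 (\sum_(r <- R) eps r.1 *: r.2)); last by rewrite epsR1.
rewrite -(sqt1 hs ht) (lin_sum (f := chi 1)); last exact: bilin_r.
apply: eq_bigr => r _ /=.
transitivity (\sum_(d <- Delta r.1) (fun t => chi (S t) r.2) (d.1 * S d.2)).
  by apply: eq_bigr => d _; rewrite /= Smul.
rewrite (anti_r_f (f := fun t => chi (S t) r.2)); last by apply: lin_cl => //; lt.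
by rewrite S1 (linZ (bilin_r hc 1)).
Qed.

Lemma nu_central h (W : lmodType k) (psi : H -> H -> W) (u : H) : bilin psi ->
  nu_app Delta S R h (fun a b => psi a (b * u)) = nu_app Delta S R h (fun a b => psi a (u * b)).
Proof.
move=> hp; have [s [hc e5]] := sqt5 hs h.
rewrite -!e5; first (apply: eq_big_seq => p hps; by rewrite (hc p hps)).
- by apply: bilinP => z; [apply: lin_cl => //; lt | apply: lin_cr => //; lt].
- by apply: bilinP => z; [apply: lin_cl => //; lt | apply: lin_cr => //; lt].
Qed.

Ltac bil hp := apply: bilinP => ?;
  first [by apply: (lin_cl _ hp); lt | by apply: (lin_cr _ hp); lt].

Lemma RSRa (W : lmodType k) (chi : H -> H -> W) F G : bilin chi ->
  \sum_(q <- R) \sum_(w <- R) chi (F * (q.2 * w.2)) (G * (q.1 * S w.1)) = chi F G.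
Proof.
move=> hc; rewrite (RSR (chi := fun x y => chi (F * y) (G * x))) ?mulr1 //; bil hc.
Qed.

Lemma RSRb (W : lmodType k) (chi : H -> H -> W) F G : bilin chi ->
  \sum_(q <- R) \sum_(w <- R) chi (F * (q.1 * S w.1)) (G * (q.2 * w.2)) = chi F G.
Proof.
move=> hc; rewrite (RSR (chi := fun x y => chi (F * x) (G * y))) ?mulr1 //; bil hc.
Qed.

Lemma RRSa (W : lmodType k) (chi : H -> H -> W) F G : bilin chi ->
  \sum_(q <- R) \sum_(w <- R) chi (F * (q.1 * w.1)) ((w.2 * S q.2) * G) = chi F G.
Proof.
move=> hc; rewrite (RRS (chi := fun x y => chi (F * x) (y * G))) ?mulr1 ?mul1r //; bil hc.
Qed.

Lemma SSRa (W : lmodType k) (chi : H -> H -> W) F G : bilin chi ->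
  \sum_(w <- R) \sum_(p <- R) chi (F * (w.2 * p.2)) ((S (S p.1) * S w.1) * G) = chi F G.
Proof.
move=> hc; rewrite (SSR (chi := fun x y => chi (F * y) (x * G))) ?mulr1 ?mul1r //; bil hc.
Qed.

Lemma factA h (W : lmodType k) (psi : H -> H -> W) : bilin psi ->
  \sum_(r <- R) \sum_(d <- Delta h) \sum_(e <- Delta d.1) psi (r.2 * e.2) (S e.1 * S r.1 * d.2)
  = \sum_(w <- R) nu_app Delta S R h (fun a b => psi (a * w.2) (S w.1 * b)).
Proof.
move=> hp.
transitivity (\sum_(w <- R) nu_app Delta S R h (fun a b => psi (a * w.2) (b * S w.1))); last first.
  apply: eq_bigr => w _; apply: (@nu_central h _ (fun a b => psi (a * w.2) b)); bil hp.
rewrite /nu_app pull5; apply: eq_bigr => r _.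
transitivity (\sum_(d <- Delta h) \sum_(e <- Delta d.1) \sum_(q <- R) \sum_(w <- R)
   psi (r.2 * e.2 * (q.2 * w.2)) (S e.1 * S r.1 * d.2 * (q.1 * S w.1))).
  by apply: eq_bigr => d _; apply: eq_bigr => e _; rewrite RSRa.
rewrite pullq; apply: eq_bigr => q _; apply: eq_bigr => d _; apply: eq_bigr => e _.
by apply: eq_bigr => w _; rewrite !mulrA.
Qed.

Lemma factB h (W : lmodType k) (psi : H -> H -> W) : bilin psi ->
  \sum_(r <- R) \sum_(d <- Delta h) \sum_(e <- Delta d.1) psi (r.1 * e.2) (S e.1 * r.2 * d.2)
  = \sum_(x <- R) nu_app Delta S R h (fun a b => psi (a * x.1) (b * x.2)).
Proof.
move=> hp.
transitivity (\sum_(x <- R) nu_app Delta S R h (fun a b => psi (a * x.1) (x.2 * b))); last first.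
  apply: eq_bigr => x _; symmetry; apply: (@nu_central h _ (fun a b => psi (a * x.1) b)); bil hp.
transitivity (\sum_(x <- R) \sum_(r <- R) \sum_(q <- R) \sum_(d <- Delta h) \sum_(e <- Delta d.1)
   psi (r.1 * e.2 * q.1 * x.1) (x.2 * (S q.2 * S e.1 * r.2 * d.2))); last first.
  apply: eq_bigr => x _; rewrite (sqt6 hs h (phi := fun a b => psi (a * x.1) (x.2 * b))) //; bil hp.
rewrite pull5; apply: eq_bigr => r _.
transitivity (\sum_(d <- Delta h) \sum_(e <- Delta d.1) \sum_(q <- R) \sum_(x <- R)
   psi (r.1 * e.2 * (q.1 * x.1)) ((x.2 * S q.2) * (S e.1 * r.2 * d.2))).
  by apply: eq_bigr => d _; apply: eq_bigr => e _; rewrite RRSa.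
rewrite pullq; apply: eq_bigr => q _; apply: eq_bigr => d _; apply: eq_bigr => e _.
by apply: eq_bigr => x _; rewrite !mulrA.
Qed.

Lemma claim1 h (W : lmodType k) (phi : H -> H -> W) : bilin phi ->
  nu_app Delta S R h phi
  = \sum_(r <- R) \sum_(q <- R) \sum_(d <- Delta h) \sum_(e <- Delta d.1)
        phi (r.2 * e.2 * q.2) (S (S q.1) * S e.1 * S r.1 * d.2).
Proof.
move=> hp.
have hpsi : bilin (fun a b => \sum_(p <- R) phi (a * p.2) (S (S p.1) * b)).
  by apply: bilin_sum => p; bil hp.
transitivity (\sum_(r <- R) \sum_(d <- Delta h) \sum_(e <- Delta d.1)
   (fun a b => \sum_(p <- R) phi (a * p.2) (S (S p.1) * b)) (r.2 * e.2) (S e.1 * S r.1 * d.2)); last first.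
  apply: eq_bigr => r _; rewrite /= pullq; apply: eq_bigr => q _; apply: eq_bigr => d _.
  by apply: eq_bigr => e _; rewrite !mulrA.
rewrite (factA h hpsi) /nu_app pull5.
apply: eq_bigr => r _; apply: eq_bigr => q _; apply: eq_bigr => d _; apply: eq_bigr => e _.
rewrite -(SSRa _ _ hp); apply: eq_bigr => w _; apply: eq_bigr => p _.
by rewrite !mulrA.
Qed.

Lemma claim2 h (W : lmodType k) (phi : H -> H -> W) : bilin phi ->
  nu_app Delta S R h phi
  = \sum_(r <- R) \sum_(q <- R) \sum_(d <- Delta h) \sum_(e <- Delta d.1)
        phi (r.1 * e.2 * S q.1) (S e.1 * r.2 * d.2 * q.2).
Proof.
move=> hp.
have hpsi : bilin (fun a b => \sum_(p <- R) phi (a * S p.1) (b * p.2)).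
  by apply: bilin_sum => p; bil hp.
transitivity (\sum_(r <- R) \sum_(d <- Delta h) \sum_(e <- Delta d.1)
   (fun a b => \sum_(p <- R) phi (a * S p.1) (b * p.2)) (r.1 * e.2) (S e.1 * r.2 * d.2)); last first.
  by apply: eq_bigr => r _; rewrite /= pullq.
rewrite (factB h hpsi) /nu_app pull5.
apply: eq_bigr => r _; apply: eq_bigr => q _; apply: eq_bigr => d _; apply: eq_bigr => e _.
rewrite -(RSRb _ _ hp); apply: eq_bigr => w _; apply: eq_bigr => p _.
by rewrite !mulrA.
Qed.

End Hopf.

Theorem proposition1p9 (k : fieldType) (H : algType k)
    (Delta : H -> seq (H * H)) (eps : H -> k) (S : H -> H) (R : seq (H * H)) :
  semiquasitriangular Delta eps S R ->
  forall (h : H) (W : lmodType k) (phi : H -> H -> W), bilin phi ->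
    nu_app Delta S R h phi
    = \sum_(r <- R) \sum_(q <- R) \sum_(d <- Delta h) \sum_(e <- Delta d.1)
        phi (r.2 * e.2 * q.2) (S (S q.1) * S e.1 * S r.1 * d.2)
  /\
    nu_app Delta S R h phi
    = \sum_(r <- R) \sum_(q <- R) \sum_(d <- Delta h) \sum_(e <- Delta d.1)
        phi (r.1 * e.2 * S q.1) (S e.1 * r.2 * d.2 * q.2).
Proof.
move=> hs h W phi hp; split; [exact: (claim1 hs h hp) | exact: (claim2 hs h hp)].
Qed.
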